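(* There exists a universal constant $c_4>0$ such that the following holds. Fix $s>0$ and $\delta\in(0,\delta_0)$. For every integer $n\ge1$, every partition $\lambda=1^{n_1}2^{n_2}\cdots$ of $n$, and every integer $a$ with $a\ge\delta n^{5/4}\ge e^{c_1}n$, \[ e^{-c_4n^2/a^2}\le\prod_{i\ge2}\mathsf K_{a,i}\le e^{c_4n^2/a^2}. \]
   Context: For integers $a,i\ge1$ let $f_{a,i}=\frac1{2i}\sum_{d\mid i,\ d\text{ odd}}\mu(d)(2a)^{i/d}$ ($\mu$ the Möbius function; sum over positive odd divisors of $i$), a positive integer, and define $g_{a,i}$ by $f_{a,i}=\frac{(2a)^i}{2i}g_{a,i}$. Let $c_1>0$ be a fixed constant such that $e^{-c_1(2a)^{-2i/3}}\le g_{a,i}\le e^{c_1(2a)^{-2i/3}}$ for all $a,i\ge1$ (e.g. $c_1=4$). For $s>0$ and $n\ge1$ let $t_n\in(0,1)$ be the unique solution in $(0,1)$ of $\frac{4t}{(1+t)^2}=e^{-s/\sqrt n}$, and $\delta_0=\left[\sup_{n\ge1}\left(n^{1/4}\log(1/t_n)e^{(c_1/4)+1}\right)\right]^{-1}$. Given a partition $\lambda$ of $n$ with $n_i$ parts of size $i$, let \[ \mathsf K_{a,i}=\sum_{\nu=0}^{n_i}\frac1{2^{n_i}}\binom{n_i}{\nu}\frac{(f_{a,i}-\nu+n_i-1)!}{(f_{a,i}-\nu)!\,f_{a,i}^{\,n_i-1}}, \] equivalently $\mathsf K_{a,i}=\frac{n_i!}{(2f_{a,i})^{n_i}}[x^{n_i}]\left(\frac{1+x}{1-x}\right)^{f_{a,i}}$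 (the ratio of factorials means $\prod_{k=1}^{n_i-1}(f_{a,i}-\nu+k)$ when $n_i\ge1$, and $\mathsf K_{a,i}=1$ when $n_i=0$). The product $\prod_{i\ge2}$ runs over $2\le i\le n$. *)

(* Defs.v *)
From HB Require Import structures.
From mathcomp Require Import all_boot all_order all_algebra.
From mathcomp Require Import all_classical all_reals all_analysis.
Set Implicit Arguments. Unset Strict Implicit. Unset Printing Implicit Defensive.
Import Order.TTheory GRing.Theory Num.Theory.
Local Open Scope ring_scope.
Local Open Scope classical_set_scope.

(* Moebius function on positive integers (value at 0 is irrelevant: 0). *)
Definition moebius (n : nat) : int :=
  if n == 0%N then 0
  else if all (fun p => logn p n == 1%N) (primes n)
       then (-1) ^+ size (primes n) else 0.

Section Defs.
Variable R : realType.

Definition fai (a i : nat) : R :=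
  (2 * i%:R)^-1 *
  \sum_(1 <= d < i.+1 | ((d %| i)%N && odd d))
      (moebius d)%:~R * (2 * a%:R) ^+ (i %/ d)%N.

(* g_{a,i} defined by f_{a,i} = (2a)^i / (2i) * g_{a,i} *)
Definition gai (a i : nat) : R := fai a i * (2 * i%:R) / (2 * a%:R) ^+ i.

(* K_{a,i} for a given multiplicity ni = n_i; the ratio of factorials
   (f-nu+ni-1)!/((f-nu)! f^(ni-1)) is the product prod_{k=1}^{ni-1} (f-nu+k)/f *)
Definition Kai (a i ni : nat) : R :=
  \sum_(0 <= nu < ni.+1)
     (2 ^+ ni)^-1 * 'C(ni, nu)%:R *
     \prod_(1 <= k < ni) ((fai a i - nu%:R + k%:R) / fai a i).

Definition tn (s : R) (n : nat) : R :=
  xget 0 [set t : R | 0 < t < 1 /\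
            4 * t / (1 + t) ^+ 2 = expR (- s / Num.sqrt n%:R)].

Definition delta0 (c1 s : R) : R :=
  (sup [set x : R | exists2 n : nat, (1 <= n)%N &
          x = n%:R `^ (4^-1) * ln ((tn s n)^-1) * expR (c1 / 4 + 1)])^-1.

End Defs.

Definition is_partition (n : nat) (lam : seq nat) : Prop :=
  all (fun x => 0 < x)%N lam /\ sorted geq lam /\ sumn lam = n.

(* Main.v *)
Require Import Defs.
From HB Require Import structures.
From mathcomp Require Import all_boot all_order all_algebra.
From mathcomp Require Import all_classical all_reals all_analysis.
From mathcomp Require Import ring lra zify.
Import Order.TTheory GRing.Theory Num.Theory.
Lemma pow_bound (a i : nat) : (2 <= i)%N -> (1 <= a)%N -> (2 * i * a ^ 2 <= (2 * a) ^ i)%N.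
Proof.
move=> hi ha; elim: i hi => [//|i IH].
rewrite leq_eqVlt => /orP[/eqP <-|hi].
  by rewrite expnMn; apply: leq_mul.
rewrite [(2 * a) ^ _]expnS; apply: (leq_trans _ (leq_mul (leqnn (2 * a)) (IH hi))).
set b := a ^ 2.
have hb : (1 <= b)%N by rewrite /b expn_gt0 ha.
have hi2 : (2 <= i)%N by [].
nia.
Qed.

Lemma sum_count (lam : seq nat) (m k : nat) :
  (\sum_(m <= i < k) count_mem i lam <= size lam)%N.
Proof.
elim: lam => [|x lam IH] /=.
  by rewrite big1.
rewrite big_split /= -add1n leq_add //.
case: (boolP (x \in index_iota m k)) => hx.
  rewrite (bigD1_seq x) //= ?iota_uniq // eqxx big1 // => i.
  by rewrite eq_sym => /negPf ->.
rewrite big1_seq // => i /andP[_ hi].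
by case: eqP => // exi; rewrite exi hi in hx.
Qed.

Lemma size_sumn (lam : seq nat) : all (fun x => 0 < x)%N lam -> (size lam <= sumn lam)%N.
Proof.
elim: lam => [//|x lam IH] /= /andP[hx hl].
by rewrite -add1n leq_add // IH.
Qed.
Local Open Scope ring_scope.


Lemma factor_bound (R : realType) (f : R) (m nu k : nat) : 0 < f -> 2 * m%:R <= f ->
  (nu <= m)%N -> (k < m)%N ->
  expR (- (2 * m%:R / f)) <= (f - nu%:R + k%:R) / f <= expR (2 * m%:R / f).
Proof.
move=> f0 hf num km.
have hnu : nu%:R <= m%:R :> R by rewrite ler_nat.
have hk : k%:R <= m%:R :> R by rewrite ler_nat ltnW.
have hk0 : 0 <= k%:R :> R by [].
have hnu0 : 0 <= nu%:R :> R by [].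
set e := m%:R / f.
have e0 : 0 <= e by rewrite divr_ge0 // ltW.
have e12 : e <= 2^-1.
  rewrite /e ler_pdivrMr // -(@ler_pM2l _ 2) //.
  by rewrite mulrA divff // mul1r.
have -> : (f - nu%:R + k%:R) / f = 1 + (k%:R - nu%:R) / f.
  by field; rewrite gt_eqF.
have xle : (k%:R - nu%:R) / f <= e.
  by rewrite /e ler_pM2r ?invr_gt0 //; lra.
have xge : - e <= (k%:R - nu%:R) / f.
  by rewrite /e -mulNr ler_pM2r ?invr_gt0 //; lra.
have -> : 2 * m%:R / f = 2 * e by rewrite /e mulrA.
apply/andP; split.
  apply: (@le_trans _ _ (1 - e)); last by lra.
  rewrite expRN.
  have h := expR_ge1Dx (2 * e).
  have hp := expR_gt0 (2 * e).
  rewrite -div1r ler_pdivrMr //.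
  nra.
apply: le_trans (expR_ge1Dx _) _.
by rewrite ler_expR; lra.
Qed.


Definition Kgen (R : realType) (f : R) (m : nat) : R :=
  \sum_(0 <= nu < m.+1)
     (2 ^+ m)^-1 * 'C(m, nu)%:R *
     \prod_(1 <= k < m) ((f - nu%:R + k%:R) / f).

Lemma wsum (R : realType) (m : nat) : \sum_(0 <= nu < m.+1) (2 ^+ m)^-1 * 'C(m, nu)%:R = 1 :> R.
Proof.
rewrite -big_distrr /= big_mkord.
have : (1 + 1 : R) ^+ m = \sum_(i < m.+1) 'C(m, i)%:R.
  by rewrite exprDn; apply: eq_bigr => i _; rewrite !expr1n mul1r.
move=> <-; rewrite mulVf // expf_neq0 //.
Qed.

Lemma Kbound (R : realType) (f : R) (m : nat) : 0 < f -> 2 * m%:R <= f ->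
  expR (- (2 * m%:R ^+ 2 / f)) <= Kgen R f m <= expR (2 * m%:R ^+ 2 / f).
Proof.
move=> f0 hf.
set y := 2 * m%:R / f.
have y0 : 0 <= y by rewrite /y divr_ge0 // ltW.
have hy : 2 * m%:R ^+ 2 / f = m%:R * y by rewrite /y; field; rewrite gt_eqF.
rewrite hy.
have Pb : forall nu, (nu < m.+1)%N ->
    expR (- (m%:R * y)) <= \prod_(1 <= k < m) ((f - nu%:R + k%:R) / f)
    <= expR (m%:R * y).
  move=> nu num.
  have hmm : ((m - 1)%:R <= m%:R :> R) by rewrite ler_nat leq_subr.
  apply/andP; split.
    apply: (@le_trans _ _ (\prod_(1 <= k < m) expR (- y))).
      rewrite prodr_const_nat -expRM_natl ler_expR.
      rewrite -mulrN; nra.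
    rewrite big_nat_cond [X in _ <= X]big_nat_cond.
    apply: ler_prod => k /andP[/andP[_ km] _].
    by rewrite expR_ge0 /=; case/andP: (@factor_bound R f m nu k f0 hf num km).
  apply: (@le_trans _ _ (\prod_(1 <= k < m) expR y)).
    rewrite big_nat_cond [X in _ <= X]big_nat_cond.
    apply: ler_prod => k /andP[/andP[_ km] _].
    have [h1 h2] := andP (@factor_bound R f m nu k f0 hf num km).
    by rewrite h2 (le_trans _ h1) // expR_ge0.
  rewrite prodr_const_nat -expRM_natl ler_expR; nra.
have w0 : forall nu, 0 <= (2 ^+ m)^-1 * 'C(m, nu)%:R :> R.
  by move=> nu; rewrite mulr_ge0 // invr_ge0 exprn_ge0.
apply/andP; split.
  have -> : expR (- (m%:R * y)) = \sum_(0 <= nu < m.+1) (2 ^+ m)^-1 * 'C(m, nu)%:R * expR (- (m%:R * y)).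
    by rewrite -big_distrl /= (wsum R) mul1r.
  rewrite /Kgen big_nat_cond [X in _ <= X]big_nat_cond.
  apply: ler_sum => nu /andP[/andP[_ num] _].
  by apply: ler_wpM2l => //; case/andP: (Pb nu num).
have -> : expR (m%:R * y) = \sum_(0 <= nu < m.+1) (2 ^+ m)^-1 * 'C(m, nu)%:R * expR (m%:R * y).
  by rewrite -big_distrl /= (wsum R) mul1r.
rewrite /Kgen big_nat_cond [X in _ <= X]big_nat_cond.
apply: ler_sum => nu /andP[/andP[_ num] _].
by apply: ler_wpM2l => //; case/andP: (Pb nu num).
Qed.


Theorem lemma3p4 (R : realType) (c1 : R) (hc1 : 0 < c1)
  (hg : forall a i : nat, (1 <= a)%N -> (1 <= i)%N ->
      expR (- c1 * (2 * a%:R) `^ (- (2 * i%:R / 3))) <= gai R a i /\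
      gai R a i <= expR (c1 * (2 * a%:R) `^ (- (2 * i%:R / 3)))) :
  exists c4 : R, 0 < c4 /\
  forall (s delta : R), 0 < s -> 0 < delta -> delta < delta0 c1 s ->
  forall (n : nat) (lam : seq nat) (a : nat), (1 <= n)%N ->
    is_partition n lam ->
    delta * n%:R `^ (5 / 4) <= a%:R ->
    expR c1 * n%:R <= delta * n%:R `^ (5 / 4) ->
    expR (- c4 * n%:R ^+ 2 / a%:R ^+ 2)
      <= \prod_(2 <= i < n.+1) Kai R a i (count_mem i lam) /\
    \prod_(2 <= i < n.+1) Kai R a i (count_mem i lam)
      <= expR (c4 * n%:R ^+ 2 / a%:R ^+ 2).
Proof.
exists (2 * expR c1); split; first by rewrite mulr_gt0 // expR_gt0.
move=> s delta s0 d0 dd0 n lam a n1 [lpos [_ lsum]] ha hn.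
set N : R := n%:R; set A : R := a%:R.
set E := expR c1.
have E1 : 1 < E by rewrite /E expR_gt1.
have N1 : 1 <= N by rewrite /N ler1n.
have AN : E * N <= A by apply: le_trans hn ha.
have NA : N < A by apply: lt_le_trans AN; rewrite -[X in X < _]mul1r ltr_pM2r //; lra.
have na : (n < a)%N by rewrite -(ltr_nat R).
have a1 : (1 <= a)%N by apply: leq_trans n1 (ltnW na).
have A2 : 2 <= A by rewrite /A (ler_nat R 2 a); apply: leq_trans na.
set F := A ^+ 2 / E.
have E0 : 0 < E by lra.
have F0 : 0 < F by rewrite /F divr_gt0 //; nra.
have hF : 2 * N <= F by rewrite /F ler_pdivlMr //; nra.
have hfi : forall i, (2 <= i)%N -> F <= fai R a i.
  move=> i hi.
  have i1 : (1 <= i)%N by apply: leq_trans hi.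
  have [hg1 _] := hg a i a1 i1.
  have hA0 : 0 < 2 * A by lra.
  have hpow : (2 * A) `^ (- (2 * i%:R / 3)) <= 1.
    have h2A : 1 <= 2 * A by lra.
    have hle : - (2 * i%:R / 3) <= 0 :> R by rewrite oppr_le0 divr_ge0.
    by have := @ler_powR R (2 * A) h2A _ _ hle; rewrite powRr0.
  have hpow0 := powR_ge0 (2 * A) (- (2 * i%:R / 3)).
  have hgE : E^-1 <= gai R a i.
    apply: le_trans hg1; rewrite /E -expRN ler_expR; nra.
  have i0 : 0 < (2 * i%:R : R) by rewrite mulr_gt0 // ltr0n.
  have hfe : fai R a i = gai R a i * ((2 * A) ^+ i / (2 * i%:R)).
    rewrite /gai; field; rewrite pnatr_eq0 -lt0n (leq_trans _ hi) //= expf_neq0 // -/A gt_eqF //; lra.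
  have hpb : A ^+ 2 <= (2 * A) ^+ i / (2 * i%:R).
    rewrite ler_pdivlMr //.
    have := pow_bound a i hi a1; rewrite -(ler_nat R) !natrM !natrX /= -/A.
    by rewrite natrM -/A mulrC expr2; move=> h; apply: le_trans h.
  rewrite hfe /F mulrC; apply: ler_pM => //; first by rewrite invr_ge0 ltW.
  by rewrite sqr_ge0.
have hsize : (size lam <= n)%N by rewrite -lsum size_sumn.
pose y i : R := 2 * N / F * (count_mem i lam)%:R.
have hK : forall i, (2 <= i)%N ->
    expR (- y i) <= Kai R a i (count_mem i lam) <= expR (y i).
  move=> i hi.
  set m := count_mem i lam.
  have mn : (m <= n)%N by apply: leq_trans (count_size _ _) hsize.
  have mN : m%:R <= N :> R by rewrite ler_nat.
  have m0 : 0 <= m%:R :> R by [].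
  have fF := hfi i hi.
  have f0 : 0 < fai R a i by apply: lt_le_trans fF.
  have h2m : 2 * m%:R <= fai R a i by apply: le_trans fF; apply: le_trans hF; lra.
  have hx : 2 * m%:R ^+ 2 / fai R a i <= y i.
    have hinv : (fai R a i)^-1 <= F^-1 by rewrite lef_pV2 // posrE.
    apply: (@le_trans _ _ (2 * m%:R ^+ 2 / F)).
      by apply: ler_wpM2l => //; rewrite mulr_ge0 // sqr_ge0.
    rewrite /y -/m [X in _ <= X]mulrAC; apply: ler_wpM2r.
      by rewrite invr_ge0 ltW.
    by rewrite expr2; nra.
  change (Kai R a i m) with (Kgen R (fai R a i) m).
  have [h1 h2] := andP (@Kbound R _ _ f0 h2m).
  apply/andP; split.
    by apply: le_trans h1; rewrite ler_expR lerN2.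
  by apply: le_trans h2 _; rewrite ler_expR.
have hS : \sum_(2 <= i < n.+1) y i <= 2 * E * N ^+ 2 / A ^+ 2.
  rewrite /y -big_distrr /= -natr_sum.
  have : (\sum_(2 <= i < n.+1) count_mem i lam <= n)%N.
    by apply: leq_trans (sum_count _ _ _) hsize.
  rewrite -(ler_nat R) -/N => hSN.
  have -> : 2 * E * N ^+ 2 / A ^+ 2 = 2 * N / F * N.
    by rewrite /F; field; rewrite gt_eqF //; lra.
  apply: ler_wpM2l => //.
  by rewrite divr_ge0 //; lra.
split.
  apply: (@le_trans _ _ (\prod_(2 <= i < n.+1) expR (- y i))).
    rewrite -expR_sum ler_expR sumrN !mulNr lerN2.
    exact: hS.
  rewrite big_nat_cond [X in _ <= X]big_nat_cond.
  apply: ler_prod => i /andP[/andP[hi _] _].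
  by rewrite expR_ge0 /=; case/andP: (hK i hi).
apply: (@le_trans _ _ (\prod_(2 <= i < n.+1) expR (y i))).
  rewrite big_nat_cond [X in _ <= X]big_nat_cond.
  apply: ler_prod => i /andP[/andP[hi _] _].
  have [h1 h2] := andP (hK i hi).
  by rewrite h2 (le_trans _ h1) // expR_ge0.
rewrite -expR_sum ler_expR.
exact: hS.
Qed.
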